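(* Let $Q$ be a finite power associative loop and let $d>1$ be an integer. (i) Suppose that $Q$ has the Cauchy property for every prime $p$ dividing $d$. If $Q$ is uniquely $d$-divisible then $|Q|$ is coprime to $d$. (ii) Suppose that $Q$ has the elementwise Lagrange property. If $|Q|$ is coprime to $d$ then $Q$ is uniquely $d$-divisible.
   Context: A loop is a magma with identity in which all left and right translations are bijections; it is power associative if every element generates a subgroup. $Q$ is uniquely $d$-divisible if $x\mapsto x^d$ is a bijection of $Q$. $Q$ has the Cauchy property for a prime $p$ if whenever $p$ divides $|Q|$ there is $x\in Q$ of order $p$. $Q$ has the elementwise Lagrange property if the order of every element divides $|Q|$. *)

(* Defs.v *)
From mathcomp Require Import all_boot.
From mathcomp Require Import boolp.
Set Implicit Arguments. Unset Strict Implicit. Unset Printing Implicit Defensive.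

Definition is_loop (T : finType) (mul : T -> T -> T) (e : T) : Prop :=
  (forall x, mul e x = x /\ mul x e = x) /\
  (forall a, bijective (mul a)) /\
  (forall a, bijective (fun x => mul x a)).

Inductive gen (T : Type) (mul : T -> T -> T) (e x : T) : T -> Prop :=
  | gen_e : gen mul e x e
  | gen_x : gen mul e x x
  | gen_mul a b : gen mul e x a -> gen mul e x b -> gen mul e x (mul a b)
  | gen_ldiv a b y : gen mul e x a -> gen mul e x b -> mul a y = b -> gen mul e x y
  | gen_rdiv a b y : gen mul e x a -> gen mul e x b -> mul y a = b -> gen mul e x y.

(* Power associative: every element generates a subgroup, i.e. the subloop it
   generates is associative (a subloop that is associative is a group). *)
Definition power_assoc (T : finType) (mul : T -> T -> T) (e : T) : Prop :=
  forall x a b c, gen mul e x a -> gen mul e x b -> gen mul e x c ->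
    mul a (mul b c) = mul (mul a b) c.

(* Powers x^n (well-defined unambiguously in a power associative loop). *)
Fixpoint lpow (T : Type) (mul : T -> T -> T) (e x : T) (n : nat) : T :=
  match n with 0 => e | n'.+1 => mul x (lpow mul e x n') end.

Definition lorder (T : finType) (mul : T -> T -> T) (e x : T) : nat :=
  #|[set y : T | `[< gen mul e x y >] ]|.

(* Main.v *)
Require Import Defs.
From mathcomp Require Import all_boot.
From mathcomp Require Import boolp.

Lemma lpow_gen (T : Type) (mul : T -> T -> T) e x n : gen mul e x (lpow mul e x n).
Proof. elim: n => [|n IH] /=; [exact: gen_e | exact: gen_mul (gen_x _ _ _) IH]. Qed.

Lemma lpowD (T : finType) (mul : T -> T -> T) e x a b :
  is_loop mul e -> power_assoc mul e ->
  lpow mul e x (a + b) = mul (lpow mul e x a) (lpow mul e x b).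
Proof.
move=> [id _] PA; elim: a => [|a IH] /=; first by rewrite (proj1 (id _)).
by rewrite IH (PA x) //; [exact: gen_x | exact: lpow_gen | exact: lpow_gen].
Qed.

Lemma lpowM (T : finType) (mul : T -> T -> T) e x a b :
  is_loop mul e -> power_assoc mul e ->
  lpow mul e x (a * b) = lpow mul e (lpow mul e x a) b.
Proof.
move=> L PA; elim: b => [|b IH]; first by rewrite muln0.
by rewrite mulnS lpowD // IH.
Qed.

Lemma lpow_e (T : Type) (mul : T -> T -> T) e n :
  (forall x, mul e x = x /\ mul x e = x) -> lpow mul e e n = e.
Proof. by move=> id; elim: n => [|n IH] //=; rewrite IH (proj1 (id _)). Qed.

Lemma iter_lpow (T : Type) (mul : T -> T -> T) e x n :
  iter n (mul x) e = lpow mul e x n.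
Proof. by elim: n => [|n IH] //=; rewrite IH. Qed.

Lemma lpow_order (T : finType) (mul : T -> T -> T) e x :
  is_loop mul e -> lpow mul e x (order (mul x) e) = e.
Proof.
move=> [_ [B _]]; rewrite -iter_lpow; apply: iter_order.
by apply: bij_inj; apply: B.
Qed.

Lemma gen_pow (T : finType) (mul : T -> T -> T) e x y :
  is_loop mul e -> power_assoc mul e ->
  gen mul e x y -> exists n, y = lpow mul e x n.
Proof.
move=> L PA; have [id [BL BR]] := L.
set r := order (mul x) e.
have Hr : lpow mul e x r = e by apply: lpow_order.
have r0 : 0 < r by apply: order_gt0.
have Hri : forall i, lpow mul e x (r * i) = e.
  by move=> i; rewrite lpowM // Hr lpow_e.
elim=> [|||a b z _ [i ->] _ [j ->] H|a b z _ [i ->] _ [j ->] H].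
- by exists 0.
- by exists 1; rewrite /= (proj2 (id _)).
- by move=> a b _ [i ->] _ [j ->]; exists (i + j); rewrite lpowD.
- exists ((r - 1) * i + j); apply: (bij_inj (BL (lpow mul e x i))).
  rewrite H -lpowD // addnA -{1}(mul1n i) -mulnDl.
  by rewrite subnKC // lpowD // Hri (proj1 (id _)).
- exists (j + (r - 1) * i); apply: (bij_inj (BR (lpow mul e x i))) => /=.
  rewrite H -lpowD // -addnA -{2}(mul1n i) -mulnDl.
  by rewrite subnK // lpowD // Hri (proj2 (id _)).
Qed.

Lemma lorder_order (T : finType) (mul : T -> T -> T) e x :
  is_loop mul e -> power_assoc mul e ->
  lorder mul e x = order (mul x) e.
Proof.
move=> L PA; rewrite /lorder /order; apply: eq_card => y.
rewrite inE; apply/asboolP/idP.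
- by case/(gen_pow _ _ _ _ _ L PA) => n ->; rewrite -iter_lpow; apply: fconnect_iter.
- by move/iter_findex <-; rewrite iter_lpow; apply: lpow_gen.
Qed.

Theorem lemma1p6 (T : finType) (mul : T -> T -> T) (e : T) (d : nat) :
  is_loop mul e -> power_assoc mul e -> 1 < d ->
  ((forall p, prime p -> p %| d ->
      (p %| #|T| -> exists x : T, lorder mul e x = p)) ->
    bijective (fun x : T => lpow mul e x d) -> coprime #|T| d) /\
  ((forall x : T, lorder mul e x %| #|T|) ->
    coprime #|T| d -> bijective (fun x : T => lpow mul e x d)).
Proof.
move=> L PA d1; have [id [BL BR]] := L; split.
- move=> Cau Bf; apply/negPn/negP => nc.
  have g1 : 1 < gcdn #|T| d.
    rewrite ltn_neqAle eq_sym nc /= gcdn_gt0.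
    by rewrite (ltnW d1) orbT.
  have pp := pdiv_prime g1.
  have pd := pdiv_dvd (gcdn #|T| d).
  have [x Hx] := Cau _ pp (dvdn_trans pd (dvdn_gcdr _ _))
                          (dvdn_trans pd (dvdn_gcdl _ _)).
  set p := pdiv _ in pp pd Hx.
  have xp : lpow mul e x p = e by rewrite -Hx lorder_order // lpow_order.
  have xe : x = e.
    apply: (bij_inj Bf) => /=; rewrite lpow_e //.
    rewrite -(divnK (dvdn_trans pd (dvdn_gcdr _ _))) mulnC lpowM // xp lpow_e //.
  have : lorder mul e e = 1.
    rewrite /lorder -(card1 e); apply: eq_card => y; rewrite inE.
    rewrite !inE; apply/asboolP/idP.
    + by case/(gen_pow _ _ _ _ _ L PA) => n ->; rewrite lpow_e.
    + by move/eqP => ->; apply: gen_e.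
  by move=> h; move: Hx; rewrite xe h => p1; rewrite -p1 in pp.
- move=> Lag cop.
  pose k y := (egcdn d (order (mul y) e)).1.
  pose g y := lpow mul e y (k y).
  have fg : cancel g (fun x => lpow mul e x d).
    move=> y; rewrite /g /k -lpowM //.
    have cr : coprime d (order (mul y) e).
      rewrite coprime_sym; apply: (coprime_dvdl _ cop).
      by rewrite -lorder_order.
    case: (egcdnP (order (mul y) e) (ltnW d1)) => km kn /= E _.
    rewrite E (eqP cr) lpowD // mulnC lpowM // lpow_order // lpow_e //.
    by rewrite (proj1 (id _)) /= (proj2 (id _)).
  have [g' gg' g'g] := injF_bij (can_inj fg).
  have fE : forall x, lpow mul e x d = g' x.
    by move=> x; rewrite -{1}(g'g x) fg.
  by exists g => x; rewrite ?fE ?g'g // -fE fg.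
Qed.
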